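(* There is a constant $C_{\rm dist}>0$ depending only on $d$, $\widehat{\mathcal T}^0$ and $(p_1,\dots,p_d)$ such that: for every admissible hierarchical mesh $\widehat{\mathcal T}_\bullet$ and every $\widehat T'\in\widehat{\mathcal T}_\bullet$, with $\widehat{\mathcal T}_\circ={\tt refine}(\widehat{\mathcal T}_\bullet,\{\widehat T'\})$, it holds that ${\rm dist}(\widehat T,\widehat T')\le C_{\rm dist}\,2^{-{\rm level}(\widehat T)}$ for all $\widehat T\in\widehat{\mathcal T}_\circ\setminus\widehat{\mathcal T}_\bullet$, where ${\rm dist}$ denotes the Euclidean distance between the midpoints of the two boxes.
   Context: Parameter domain $\widehat\Omega=(0,1)^d$, $d\ge2$; degrees $p_1,\dots,p_d\ge1$. For each $i$, $\widehat{\mathcal K}^0_i$ is a $p_i$-open knot vector in $[0,1]$ (first $p_i+1$ knots $0$, last $p_i+1$ knots $1$, interior multiplicities $\le p_i$); $\widehat{\mathcal K}^{k+1}_i$ arises from $\widehat{\mathcal K}^k_i$ by inserting each nondegenerate span's midpoint once. $\widehat{\mathcal B}^k$: tensor-product B-splines of degree $(p_1,\dots,p_d)$ for $\widehat{\mathcal K}^k$; $\widehat{\mathcal T}^k$: closed cells of level $k$. A hierarchical mesh is given by closed sets $[0,1]^d=\widehat\Omega^0_\bullet\supseteq\widehat\Omega^1_\bullet\supseteq\cdots$, each $\widehat\Omega^k_\bullet$ ($k\ge1$) a union of cells of $\widehat{\mathcal T}^{k-1}$, eventually empty; mesh $\widehat{\mathcal T}_\bullet=\bigcup_k\{\widehat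 T\in\widehat{\mathcal T}^k:\widehat T\subseteq\widehat\Omega^k_\bullet,\widehat T\not\subseteq\widehat\Omega^{k+1}_\bullet\}$, ${\rm level}(\widehat T)=k$; hierarchical basis $\widehat{\mathcal H}_\bullet=\bigcup_k\{\widehat\beta\in\widehat{\mathcal B}^k:{\rm supp}\,\widehat\beta\subseteq\widehat\Omega^k_\bullet,{\rm supp}\,\widehat\beta\not\subseteq\widehat\Omega^{k+1}_\bullet\}$. Neighbors $\mathcal N_\bullet(\widehat T)=\{\widehat T'\in\widehat{\mathcal T}_\bullet:\exists\widehat\beta\in\widehat{\mathcal H}_\bullet,\widehat T,\widehat T'\subseteq{\rm supp}\,\widehat\beta\}$; bad neighbors $\mathcal N^{\rm bad}_\bullet(\widehat T)=\{\widehat T'\in\mathcal N_\bullet(\widehat T):{\rm level}(\widehat T')={\rm level}(\widehat T)-1\}$. Admissible: $|{\rm level}(\widehat T)-{\rm level}(\widehat T')|\le1$ whenever $\widehat T'\in\mathcal N_\bullet(\widehat T)$. ${\tt refine}(\widehat{\mathcal T}_\bullet,\widehat{\mathcal M})$: $\widehat{\mathcal M}^{(0)}=\widehat{\mathcal M}$, $\widehat{\mathcal M}^{(i+1)}=\widehat{\mathcal M}^{(i)}\cup\bigcup_{\widehat T\in\widehat{\mathcal M}^{(i)}}\mathcal N^{\rm bad}_\bullet(\widehat T)$ until stationary; each $\widehat T$ in the final set is added to $\widehat\Omega^{{\rm level}(\widehat T)+1}$. *)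

(* Defs.v *)
From Stdlib Require Import Reals List Arith.
Import ListNotations.
Open Scope R_scope.

(* Points of R^d are functions nat -> R; only coordinates i < d matter.
   A box (closed axis-parallel) is a function nat -> R*R giving, for each
   coordinate i < d, the interval [fst (c i), snd (c i)]. *)
Definition point := nat -> R.
Definition box := nat -> (R * R).

Definition in_box (d : nat) (c : box) (x : point) : Prop :=
  forall i, (i < d)%nat -> fst (c i) <= x i <= snd (c i).

Definition unit_cube (d : nat) (x : point) : Prop :=
  forall i, (i < d)%nat -> 0 <= x i <= 1.

Definition box_in_set (d : nat) (c : box) (S : point -> Prop) : Prop :=
  forall x, in_box d c x -> S x.

Definition box_sub (d : nat) (c c' : box) : Prop :=
  forall x, in_box d c x -> in_box d c' x.

Definition knot (K : list R) (j : nat) : R := nth j K 0.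

(* p-open knot vector in [0,1]: nondecreasing, first p+1 knots equal 0,
   last p+1 knots equal 1, end multiplicities exactly p+1,
   interior multiplicities <= p. *)
Definition open_knots (p : nat) (K : list R) : Prop :=
  (2 * (p + 1) <= length K)%nat /\
  (forall j, (S j < length K)%nat -> knot K j <= knot K (S j)) /\
  (forall j, (j <= p)%nat -> knot K j = 0) /\
  (forall j, (j <= p)%nat -> knot K (length K - 1 - j) = 1) /\
  0 < knot K (S p) /\
  knot K (length K - 2 - p) < 1 /\
  (forall j, (j + p < length K)%nat -> knot K j = knot K (j + p) ->
       knot K j = 0 \/ knot K j = 1).

Fixpoint insert_mid (K : list R) : list R :=
  match K with
  | x :: ((y :: _) as t) =>
      if Req_EM_T x y then x :: insert_mid t
      else x :: (x + y) / 2 :: insert_mid t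
  | _ => K
  end.

Definition knots_lvl (K0 : nat -> list R) (k i : nat) : list R :=
  Nat.iter k insert_mid (K0 i).

Definition cell (d : nat) (K0 : nat -> list R) (k : nat) (c : box) : Prop :=
  forall i, (i < d)%nat ->
    exists j, (S j < length (knots_lvl K0 k i))%nat /\
      knot (knots_lvl K0 k i) j < knot (knots_lvl K0 k i) (S j) /\
      c i = (knot (knots_lvl K0 k i) j, knot (knots_lvl K0 k i) (S j)).

(* a tensor-product B-spline of B^k is identified by its multi-index j *)
Definition bspline_idx (d : nat) (p : nat -> nat) (K0 : nat -> list R)
    (k : nat) (j : nat -> nat) : Prop :=
  forall i, (i < d)%nat -> (j i + p i + 1 < length (knots_lvl K0 k i))%nat.

Definition supp (p : nat -> nat) (K0 : nat -> list R) (k : nat)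
    (j : nat -> nat) : box :=
  fun i => (knot (knots_lvl K0 k i) (j i),
            knot (knots_lvl K0 k i) (j i + p i + 1)).

Definition hier_mesh (d : nat) (K0 : nat -> list R)
    (Om : nat -> point -> Prop) : Prop :=
  (forall x, Om 0%nat x <-> unit_cube d x) /\
  (forall k x, Om (S k) x -> Om k x) /\
  (forall k x, Om (S k) x <->
      exists c, cell d K0 k c /\ box_in_set d c (Om (S k)) /\ in_box d c x) /\
  (exists N, forall x, ~ Om N x).

Definition in_mesh (d : nat) (K0 : nat -> list R)
    (Om : nat -> point -> Prop) (k : nat) (c : box) : Prop :=
  cell d K0 k c /\ box_in_set d c (Om k) /\ ~ box_in_set d c (Om (S k)).

Definition in_H (d : nat) (p : nat -> nat) (K0 : nat -> list R)
    (Om : nat -> point -> Prop) (k : nat) (j : nat -> nat) : Prop :=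
  bspline_idx d p K0 k j /\ box_in_set d (supp p K0 k j) (Om k) /\
  ~ box_in_set d (supp p K0 k j) (Om (S k)).

Definition share_support (d : nat) (p : nat -> nat) (K0 : nat -> list R)
    (Om : nat -> point -> Prop) (c c' : box) : Prop :=
  exists l j, in_H d p K0 Om l j /\
    box_sub d c (supp p K0 l j) /\ box_sub d c' (supp p K0 l j).

Definition neighbor (d : nat) (p : nat -> nat) (K0 : nat -> list R)
    (Om : nat -> point -> Prop) (k : nat) (c : box) (k' : nat) (c' : box)
    : Prop :=
  in_mesh d K0 Om k c /\ in_mesh d K0 Om k' c' /\ share_support d p K0 Om c c'.

Definition admissible (d : nat) (p : nat -> nat) (K0 : nat -> list R)
    (Om : nat -> point -> Prop) : Prop :=
  forall k c k' c', neighbor d p K0 Om k c k' c' ->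
    (k <= k' + 1)%nat /\ (k' <= k + 1)%nat.

(* The final marked set of refine(T_bullet, {c0}) (c0 of level k0):
   the least set containing c0 and closed under bad neighbors
   (= the stationary limit of the iteration M^(i)).
   marked c k means c is marked and has level k. *)
Inductive marked (d : nat) (p : nat -> nat) (K0 : nat -> list R)
    (Om : nat -> point -> Prop) (c0 : box) (k0 : nat) : box -> nat -> Prop :=
  | marked_base : marked d p K0 Om c0 k0 c0 k0
  | marked_step : forall c k c' k',
      marked d p K0 Om c0 k0 c k ->
      neighbor d p K0 Om k c k' c' -> (k' + 1 = k)%nat ->
      marked d p K0 Om c0 k0 c' k'.

Definition refine_omega (d : nat) (p : nat -> nat) (K0 : nat -> list R)
    (Om : nat -> point -> Prop) (c0 : box) (k0 : nat) : nat -> point -> Prop :=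
  fun k x =>
    match k with
    | O => Om O x
    | S m => Om (S m) x \/ exists c, marked d p K0 Om c0 k0 c m /\ in_box d c x
    end.

Fixpoint sumR (n : nat) (f : nat -> R) : R :=
  match n with
  | O => 0
  | S m => sumR m f + f m
  end.

Definition midpoint (c : box) : point := fun i => (fst (c i) + snd (c i)) / 2.

Definition mid_dist (d : nat) (c c' : box) : R :=
  sqrt (sumR d (fun i => (midpoint c i - midpoint c' i) ^ 2)).

(* Main.v *)
Require Import Defs.
From Stdlib Require Import Reals List Arith Lia Lra Classical.
Import ListNotations.
Open Scope R_scope.


Fixpoint gaps (h : R) (K : list R) : Prop :=
  match K with
  | x :: ((y :: _) as t) => x <= y <= x + h /\ gaps h t
  | _ => True
  end.

Lemma gaps_knot h K : gaps h K -> forall j, (S j < length K)%nat ->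
  knot K j <= knot K (S j) <= knot K j + h.
Proof.
  induction K as [|x t IH]; intros G j Hj; simpl in Hj; [lia|].
  destruct t as [|y t']; simpl in Hj; [lia|].
  destruct G as [G1 G2]. destruct j as [|j].
  - unfold knot; simpl; lra.
  - unfold knot in *; simpl. apply (IH G2 j). simpl; lia.
Qed.

Lemma knot_gaps h K : (forall j, (S j < length K)%nat ->
  knot K j <= knot K (S j) <= knot K j + h) -> gaps h K.
Proof.
  induction K as [|x t IH]; intros G; simpl; auto.
  destruct t as [|y t']; auto. split.
  - apply (G 0%nat). simpl; lia.
  - apply IH. intros j Hj. apply (G (S j)). simpl in *; lia.
Qed.

Lemma insert_mid_head y t : exists r, insert_mid (y :: t) = y :: r.
Proof.
  destruct t as [|z t]; simpl. exists []; auto.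
  destruct (Req_EM_T y z); eexists; reflexivity.
Qed.

Lemma insert_mid_cons x y t : insert_mid (x :: y :: t) =
  if Req_EM_T x y then x :: insert_mid (y :: t) else x :: (x+y)/2 :: insert_mid (y :: t).
Proof. reflexivity. Qed.

Lemma gaps_insert h K : 0 <= h -> gaps h K -> gaps (h/2) (insert_mid K).
Proof.
  intros Hh. induction K as [|x t IH]; intros G; [simpl; auto|].
  destruct t as [|y t']; [simpl; auto|].
  destruct G as [G1 G2]. specialize (IH G2).
  destruct (insert_mid_head y t') as [r Hr]. rewrite Hr in IH.
  rewrite insert_mid_cons, Hr.
  destruct (Req_EM_T x y) as [E|E].
  - simpl. split; [lra|exact IH].
  - simpl. split; [lra|]. split; [lra|exact IH].
Qed.

Lemma mono_f (f : nat -> R) n : (forall j, (S j < n)%nat -> f j <= f (S j)) ->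
  forall a b, (a <= b)%nat -> (b < n)%nat -> f a <= f b.
Proof.
  intros Hf a b Hab. induction Hab; intros Hb. lra.
  specialize (IHHab ltac:(lia)). specialize (Hf m ltac:(lia)). lra.
Qed.

Lemma gaps_add h K : gaps h K -> forall j n, (j + n < length K)%nat ->
  knot K (j + n) <= knot K j + INR n * h.
Proof.
  intros G j n. induction n; intros Hn.
  - rewrite Nat.add_0_r. simpl. lra.
  - specialize (IHn ltac:(lia)). replace (j + S n)%nat with (S (j + n)) by lia.
    pose proof (gaps_knot h K G (j+n) ltac:(lia)). rewrite S_INR. lra.
Qed.


Lemma open_gaps p K : open_knots p K -> gaps 1 K.
Proof.
  intros (Hl & Hs & H0 & H1 & _).
  apply knot_gaps. intros j Hj.
  pose proof (Hs j Hj).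
  assert (knot K 0 <= knot K j) by (apply (mono_f (knot K) (length K)); auto; lia).
  assert (knot K (S j) <= knot K (length K - 1 - 0)) by (apply (mono_f (knot K) (length K)); auto; lia).
  rewrite H0 in * by lia. rewrite H1 in * by lia. lra.
Qed.

Lemma lvl_gaps d p K0 : (forall i, (i < d)%nat -> open_knots (p i) (K0 i)) ->
  forall k i, (i < d)%nat -> gaps ((/2)^k) (knots_lvl K0 k i).
Proof.
  intros HK k i Hi. induction k.
  - simpl. unfold knots_lvl. simpl. eapply open_gaps; eauto.
  - change (knots_lvl K0 (S k) i) with (insert_mid (knots_lvl K0 k i)).
    replace ((/2)^(S k)) with ((/2)^k / 2) by (simpl; field).
    apply gaps_insert; auto. apply pow_le; lra.
Qed.

Lemma cell_props d K0 k c (G : forall i, (i < d)%nat -> gaps ((/2)^k) (knots_lvl K0 k i)) :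
  cell d K0 k c -> forall i, (i < d)%nat ->
  fst (c i) < snd (c i) /\ snd (c i) <= fst (c i) + (/2)^k.
Proof.
  intros Hc i Hi. destruct (Hc i Hi) as (j & Hj & Hlt & E). rewrite E; simpl.
  pose proof (gaps_knot _ _ (G i Hi) j Hj). lra.
Qed.

Lemma span_find (f : nat -> R) n : forall a x, (forall j, (S j <= a + n)%nat -> f j <= f (S j)) ->
  f a <= x <= f (a + n)%nat -> f a < f (a + n)%nat ->
  exists r, (a <= r)%nat /\ (r < a + n)%nat /\ f r <= x <= f (S r) /\ f r < f (S r).
Proof.
  induction n; intros a x Hm Hx Hlt.
  - rewrite Nat.add_0_r in Hlt. lra.
  - destruct (Rle_lt_dec (f (S a)) x) as [H1|H1].
    + destruct (Req_EM_T (f (S a)) (f (a + S n)%nat)) as [E|E].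
      * exists a. assert (f a <= f (S a)) by (apply Hm; lia). repeat split; try lia; lra.
      * destruct (IHn (S a) x) as (r & R1 & R2 & R3 & R4).
        -- intros j Hj. apply Hm. lia.
        -- replace (S a + n)%nat with (a + S n)%nat by lia. lra.
        -- replace (S a + n)%nat with (a + S n)%nat by lia.
           assert (f (S a) <= f (a + S n)%nat).
           { apply (mono_f f (S (a + S n))); try lia. intros j Hj. apply Hm; lia. }
           lra.
        -- exists r. repeat split; try lia; lra.
    + exists a. repeat split; try lia; lra.
Qed.

Lemma fin_choice (P : nat -> nat -> Prop) d :
  (forall i, (i < d)%nat -> exists r, P i r) ->
  exists f : nat -> nat, forall i, (i < d)%nat -> P i (f i).
Proof.
  induction d; intros H.
  - exists (fun _ => 0%nat). intros; lia.
  - destruct IHd as [f Hf]. { intros; apply H; lia. }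
    destruct (H d ltac:(lia)) as [r Hr].
    exists (fun i => if Nat.eqb i d then r else f i).
    intros i Hi. destruct (Nat.eqb_spec i d). subst; auto. apply Hf; lia.
Qed.



Lemma mid_in (d : nat) (K0 : nat -> list R) (G : forall k i, (i < d)%nat -> gaps ((/2)^k) (knots_lvl K0 k i)) k c : cell d K0 k c -> in_box d c (midpoint c).
Proof.
  intros Hc i Hi. destruct (cell_props d K0 k c (G k) Hc i Hi). unfold midpoint. lra.
Qed.

Lemma lo_in (d : nat) (K0 : nat -> list R) (G : forall k i, (i < d)%nat -> gaps ((/2)^k) (knots_lvl K0 k i)) k c : cell d K0 k c -> in_box d c (fun t => fst (c t)).
Proof.
  intros Hc i Hi. destruct (cell_props d K0 k c (G k) Hc i Hi). lra.
Qed.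

Lemma hi_in (d : nat) (K0 : nat -> list R) (G : forall k i, (i < d)%nat -> gaps ((/2)^k) (knots_lvl K0 k i)) k c : cell d K0 k c -> in_box d c (fun t => snd (c t)).
Proof.
  intros Hc i Hi. destruct (cell_props d K0 k c (G k) Hc i Hi). lra.
Qed.

Lemma nb_bound (d : nat) (p : nat -> nat) (K0 : nat -> list R) (G : forall k i, (i < d)%nat -> gaps ((/2)^k) (knots_lvl K0 k i)) Om : admissible d p K0 Om -> forall k c k' c', neighbor d p K0 Om k c k' c' ->
  exists l, (k' <= l + 1)%nat /\ forall i, (i < d)%nat ->
    Rabs (midpoint c i - midpoint c' i) <= INR (p i + 1) * (/2)^l.
Proof.
  intros Had k c k' c' Hn.
  destruct Hn as (Hc & Hc' & l & j & Hb & Sc & Sc'). exists l. split.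
  - destruct Hb as (Hidx & Hsub & Hnot).
    assert (exists x, in_box d (supp p K0 l j) x /\ ~ Om (S l) x) as [x [Hx Hnx]].
    { apply NNPP. intro N. apply Hnot. intros x Hx. apply NNPP. intro N2. apply N. eauto. }
    assert (Hch : forall i, (i < d)%nat -> exists r, (j i <= r)%nat /\ (r < j i + (p i + 1))%nat /\
      knot (knots_lvl K0 l i) r <= x i <= knot (knots_lvl K0 l i) (S r) /\
      knot (knots_lvl K0 l i) r < knot (knots_lvl K0 l i) (S r)).
    { intros i Hi. pose proof (Hidx i Hi) as Hix.
      apply span_find.
      - intros t Ht. apply (gaps_knot _ _ (G l i Hi)). lia.
      - replace (j i + (p i + 1))%nat with (j i + p i + 1)%nat by lia. apply (Hx i Hi).
      - replace (j i + (p i + 1))%nat with (j i + p i + 1)%nat by lia.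
        destruct Hc' as (Hcc' & _).
        pose proof (Sc' _ (lo_in d K0 G _ _ Hcc') i Hi) as A1.
        pose proof (Sc' _ (hi_in d K0 G _ _ Hcc') i Hi) as A2.
        pose proof (cell_props d K0 k' c' (G k') Hcc' i Hi).
        unfold supp in A1, A2; simpl in A1, A2. lra. }
    destruct (fin_choice _ d Hch) as [f Hf].
    set (Q := fun i => (knot (knots_lvl K0 l i) (f i), knot (knots_lvl K0 l i) (S (f i)))).
    assert (QS : box_sub d Q (supp p K0 l j)).
    { intros y Hy i Hi. specialize (Hy i Hi). unfold Q in Hy; simpl in Hy.
      destruct (Hf i Hi) as (F1 & F2 & F3 & F4). unfold supp; simpl.
      assert (knot (knots_lvl K0 l i) (j i) <= knot (knots_lvl K0 l i) (f i)).
      { apply (mono_f _ (length (knots_lvl K0 l i))); try lia.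
        - intros t Ht. apply (gaps_knot _ _ (G l i Hi)). lia.
        - pose proof (Hidx i Hi). lia. }
      assert (knot (knots_lvl K0 l i) (S (f i)) <= knot (knots_lvl K0 l i) (j i + p i + 1)).
      { apply (mono_f _ (length (knots_lvl K0 l i))); try lia.
        - intros t Ht. apply (gaps_knot _ _ (G l i Hi)). lia.
        - pose proof (Hidx i Hi). lia. }
      lra. }
    assert (HQ : in_mesh d K0 Om l Q).
    { split; [|split].
      - intros i Hi. destruct (Hf i Hi) as (F1 & F2 & F3 & F4). exists (f i).
        split; [pose proof (Hidx i Hi); lia|]. split; auto.
      - intros y Hy. apply Hsub. apply QS. auto.
      - intros HQ. apply Hnx. apply HQ. intros i Hi. destruct (Hf i Hi) as (F1 & F2 & F3 & F4).
        unfold Q; simpl. lra. }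
    assert (Hnb : neighbor d p K0 Om l Q k' c').
    { split; [auto|split; [auto|]]. exists l, j. split; [split; auto|]. split; auto. }
    destruct (Had _ _ _ _ Hnb). lia.
  - intros i Hi. destruct Hc as (Hcc & _). destruct Hc' as (Hcc' & _).
    pose proof (Sc _ (mid_in d K0 G _ _ Hcc) i Hi) as A1.
    pose proof (Sc' _ (mid_in d K0 G _ _ Hcc') i Hi) as A2.
    unfold supp in A1, A2; simpl in A1, A2.
    destruct Hb as (Hidx & _).
    pose proof (gaps_add _ _ (G l i Hi) (j i) (p i + 1) ltac:(pose proof (Hidx i Hi); lia)) as W.
    replace (j i + (p i + 1))%nat with (j i + p i + 1)%nat in W by lia.
    apply Rabs_le. lra.
Qed.


Lemma hp a b : (a <= b)%nat -> (/2)^b <= (/2)^a.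
Proof.
  intros H. induction H. lra. simpl. assert (0 <= (/2)^m) by (apply pow_le; lra). lra.
Qed.

Lemma pm_exists (p : nat -> nat) d : exists Pm, forall i, (i < d)%nat -> (p i <= Pm)%nat.
Proof.
  induction d. exists 0%nat; intros; lia.
  destruct IHd as [P HP]. exists (Nat.max P (p d)). intros i Hi.
  destruct (Nat.eq_dec i d). subst; lia. specialize (HP i ltac:(lia)). lia.
Qed.

Lemma chain d p K0 Om Pm (G : forall k i, (i < d)%nat -> gaps ((/2)^k) (knots_lvl K0 k i)) :
  admissible d p K0 Om -> (forall i, (i < d)%nat -> (p i <= Pm)%nat) ->
  forall T' k0 c m, marked d p K0 Om T' k0 c m ->
  forall i, (i < d)%nat -> Rabs (midpoint c i - midpoint T' i) <= 4 * (INR Pm + 1) * (/2)^m.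
Proof.
  intros Had HP T' k0 c m Hm. induction Hm; intros i Hi.
  - unfold Rminus. rewrite Rplus_opp_r, Rabs_R0.
    assert (0 <= (/2)^k0) by (apply pow_le; lra). pose proof (pos_INR Pm). nra.
  - specialize (IHHm i Hi).
    destruct (nb_bound d p K0 G Om Had _ _ _ _ H) as (l & Hl & Hb).
    specialize (Hb i Hi). pose proof (hp k' (l+1) Hl) as E.
    rewrite pow_add in E. simpl in E.
    subst k. rewrite pow_add in IHHm. simpl in IHHm.
    assert (INR (p i + 1) <= INR Pm + 1) by (rewrite plus_INR; simpl; apply Rplus_le_compat_r, le_INR, HP; auto).
    assert (0 <= (/2)^l) by (apply pow_le; lra).
    assert (0 <= (/2)^k') by (apply pow_le; lra).
    pose proof (pos_INR Pm).
    assert (X1 : INR (p i + 1) * (/2)^l <= (INR Pm + 1) * (/2)^l) by (apply Rmult_le_compat_r; lra).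
    assert (X2 : (INR Pm + 1) * (/2)^l <= (INR Pm + 1) * (2 * (/2)^k')).
    { apply Rmult_le_compat_l; lra. }
    set (h := (/2)^k') in *. set (Q := INR Pm + 1) in *.
    assert (Rabs (midpoint c' i - midpoint T' i) <= Rabs (midpoint c i - midpoint T' i) + Rabs (midpoint c i - midpoint c' i)).
    { replace (midpoint c' i - midpoint T' i) with ((midpoint c i - midpoint T' i) - (midpoint c i - midpoint c' i)) by ring.
      apply Rabs_triang_inv2 || (unfold Rminus; eapply Rle_trans; [apply Rabs_triang|rewrite Rabs_Ropp; lra]). }
    lra.
Qed.


Lemma sumR_bound n f B : (forall i, (i < n)%nat -> f i <= B) -> sumR n f <= INR n * B.
Proof.
  induction n; intros H. simpl; lra.
  simpl sumR. rewrite S_INR. specialize (IHn ltac:(intros; apply H; lia)).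
  specialize (H n ltac:(lia)). lra.
Qed.

Lemma marked_mesh d p K0 Om T' k0 c m : marked d p K0 Om T' k0 c m ->
  in_mesh d K0 Om k0 T' -> in_mesh d K0 Om m c.
Proof. intros Hm HT. induction Hm; auto. destruct H as (_ & H & _). auto. Qed.

Lemma tri a b c : Rabs (a - c) <= Rabs (a - b) + Rabs (b - c).
Proof.
  replace (a - c) with ((a - b) + (b - c)) by ring. apply Rabs_triang.
Qed.

Theorem lemma5p5 (d : nat) (p : nat -> nat) (K0 : nat -> list R) :
  (2 <= d)%nat ->
  (forall i, (i < d)%nat -> (1 <= p i)%nat) ->
  (forall i, (i < d)%nat -> open_knots (p i) (K0 i)) ->
  exists Cdist : R, 0 < Cdist /\
    forall (Om : nat -> point -> Prop),
      hier_mesh d K0 Om ->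
      admissible d p K0 Om ->
      forall (T' : box) (kT' : nat), in_mesh d K0 Om kT' T' ->
      forall (T : box) (kT : nat),
        in_mesh d K0 (refine_omega d p K0 Om T' kT') kT T ->
        ~ (exists l, in_mesh d K0 Om l T) ->
        mid_dist d T T' <= Cdist * (/ 2) ^ kT.
Proof.
  intros Hd Hp HK.
  destruct (pm_exists p d) as [Pm HP].
  pose proof (lvl_gaps d p K0 HK) as G.
  pose proof (pos_INR Pm) as HPm.
  assert (Hd1 : 2 <= INR d) by (apply (le_INR 2 d) in Hd; simpl in Hd; lra).
  exists (INR d * (8 * (INR Pm + 1) + 2)). split. { apply Rmult_lt_0_compat; lra. }
  intros Om Hh Had T' kT' HT' T kT HT Hnot.
  destruct HT as (HTc & HTs & HTn).
  destruct kT as [|m].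
  { exfalso. apply Hnot. exists 0%nat. split; auto. split; [exact HTs|].
    intro H. apply HTn. intros y Hy. left. apply H; auto. }
  assert (HnS : ~ box_in_set d T (Om (S m))).
  { intro H. apply Hnot. exists (S m). split; auto. split; auto.
    intro H2. apply HTn. intros y Hy. left. auto. }
  assert (exists x, in_box d T x /\ ~ Om (S m) x) as [x [Hx Hnx]].
  { apply NNPP. intro N. apply HnS. intros x Hx. apply NNPP. intro N2. apply N. eauto. }
  destruct (HTs x Hx) as [Hc|[c [Hmc Hxc]]]; [contradiction|].
  pose proof (marked_mesh _ _ _ _ _ _ _ _ Hmc HT') as [Hcc _].
  set (h := (/2)^(S m)).
  assert (Hh0 : 0 <= h) by (apply pow_le; lra).
  assert (Hhm : (/2)^m = 2 * h) by (unfold h; simpl; field).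
  set (B := (8 * (INR Pm + 1) + 2) * h).
  assert (Hco : forall i, (i < d)%nat -> Rabs (midpoint T i - midpoint T' i) <= B).
  { intros i Hi.
    pose proof (chain d p K0 Om Pm G Had HP _ _ _ _ Hmc i Hi) as C1.
    pose proof (cell_props d K0 _ _ (G _) HTc i Hi) as C2.
    pose proof (cell_props d K0 _ _ (G _) Hcc i Hi) as C3.
    specialize (Hx i Hi). specialize (Hxc i Hi).
    fold h in C2. rewrite Hhm in C1, C3.
    assert (Rabs (midpoint T i - x i) <= h / 2) by (unfold midpoint; apply Rabs_le; lra).
    assert (Rabs (x i - midpoint c i) <= h) by (unfold midpoint; apply Rabs_le; lra).
    pose proof (tri (midpoint T i) (x i) (midpoint T' i)).
    pose proof (tri (x i) (midpoint c i) (midpoint T' i)).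
    unfold B. lra. }
  assert (HB0 : 0 <= B) by (unfold B; apply Rmult_le_pos; lra).
  unfold mid_dist.
  apply Rle_trans with (sqrt ((INR d * B) ^ 2)).
  - apply sqrt_le_1_alt.
    apply Rle_trans with (INR d * B ^ 2).
    + apply sumR_bound. intros i Hi. specialize (Hco i Hi).
      rewrite <- (pow2_abs (midpoint T i - midpoint T' i)).
      apply pow_incr. split; [apply Rabs_pos|auto].
    + assert (0 <= B^2) by (apply pow_le; auto). simpl. nra.
  - rewrite sqrt_pow2 by (apply Rmult_le_pos; lra). unfold B. fold h. lra.
Qed.
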